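(* Let $(G,c)$ be a $k$-terminal network with terminal set $Q$, where $G$ is a connected plane graph and $c$ is such that any two distinct subsets of $E(G)$ have distinct total costs. Let $G^*$ be the planar dual of $G$. For $S\subset Q$ ($S\ne\emptyset,Q$) let $E_S$ be the (unique) cutset of the minimum-cost $S$-separating cut in $G$, and $E_S^*=\{e^*:e\in E_S\}$. Then for all such $S,T\subset Q$, the subgraph $G^*[E_S^*\cup E_T^*]$ of $G^*$ (consisting of the edges $E_S^*\cup E_T^*$ and their endpoints) has at most $6k$ vertices of degree greater than $2$.
   Context: The dual $G^*$ of a connected plane (multi-)graph $G$ has a vertex $v^*_f$ for each face $f$ of $G$, and for each edge $e\in E(G)$ lying on the boundary of faces $f_1,f_2$ a dual edge $e^*=(v^*_{f_1},v^*_{f_2})$ with cost $c(e^* )=c(e)$ ($G^*$ may have loops and parallel edges; a loop contributes 2 to the degree). For $S\subset Q$, $\bar S=Q\setminus S$; a cut $(W,V(G)\setminus W)$ is $S$-separating if $W\cap Q\in\{S,\bar S\}$; its cutset is the set of edges with exactly one endpoint in $W$, and its cost is the total cost of these edges. Edge costs are positive reals. *)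

(* Defs.v *)
(* Plane multigraphs are represented as combinatorial maps
   (rotation systems) of genus 0. *)
From HB Require Import structures.
From mathcomp Require Import all_boot all_order all_algebra.
Set Implicit Arguments. Unset Strict Implicit. Unset Printing Implicit Defensive.
Import Order.TTheory GRing.Theory Num.Theory.
Local Open Scope ring_scope.

(* Darts D; [a] pairs the two darts (half-edges) of each edge; [n] is the
   rotation of darts around their vertex.  Vertices = orbits of [n],
   edges = orbits of [a], faces = orbits of [n \o a]. *)
Definition orbits (D : finType) (f : D -> D) : {set {set D}} :=
  [set [set y | fconnect f x y] | x : D].

Definition vertices (D : finType) (n : D -> D) := orbits n.
Definition faces (D : finType) (a n : D -> D) := orbits (n \o a).

(* A connected plane (multi)graph: a connected combinatorial map of genus 0
   (Euler: V - E + F = 2). *)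
Definition connected_plane_map (D : finType) (a n : D -> D) : Prop :=
  [/\ involutive a, (forall x, a x != x), injective n,
      (forall x y, connect [rel u v | (v == n u) || (v == a u)] x y) &
      (#|vertices n| + #|faces a n| = #|D|./2 + 2)%N ].

(* a set of darts representing a set of edges *)
Definition a_closed (D : finType) (a : D -> D) (F : {set D}) : Prop :=
  forall x, (x \in F) = (a x \in F).

(* a set of darts representing a set of vertices W *)
Definition n_closed (D : finType) (n : D -> D) (W : {set D}) : Prop :=
  forall x, (x \in W) = (n x \in W).

Definition cutset (D : finType) (a : D -> D) (W : {set D}) : {set D} :=
  [set x | (x \in W) != (a x \in W)].

(* cost of an edge set (given as an a-closed dart set): each edge has 2 darts *)
Definition ecost (R : realFieldType) (D : finType) (c : D -> R) (F : {set D}) : R :=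
  (\sum_(x in F) c x) / 2%:R.

(* terminals q : 'I_k -> D (q i is a dart at the i-th terminal vertex) *)
Definition separating (D : finType) (n : D -> D) (k : nat) (q : 'I_k -> D)
  (S : {set 'I_k}) (W : {set D}) : Prop :=
  n_closed n W /\ ([set i | q i \in W] = S \/ [set i | q i \in W] = ~: S).

Definition min_sep_cutset (R : realFieldType) (D : finType) (a n : D -> D)
  (c : D -> R) (k : nat) (q : 'I_k -> D) (S : {set 'I_k}) (E : {set D}) : Prop :=
  exists W, [/\ separating n q S W, E = cutset a W &
     forall W', separating n q S W' -> ecost c E <= ecost c (cutset a W')].

(* number of vertices of degree > 2 in the subgraph G*[F*] of the dual:
   dual vertices are faces, the degree of face f is the number of darts of F
   in f (a dual loop contributes 2). *)
Definition dual_high_degree (D : finType) (a n : D -> D) (F : {set D}) : nat :=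
  #|[set f in faces a n | (2 < #|f :&: F|)%N]|.

(* Main.v *)
Require Import Defs.
From mathcomp Require Import all_boot all_order all_algebra.
From mathcomp Require Import perm zify ring lra.
Set Implicit Arguments. Unset Strict Implicit. Unset Printing Implicit Defensive.

Section Merge.
Variable D : finType.

Definition cls (r : rel D) : {set {set D}} := [set [set v | connect r u v] | u : D].

Lemma conn_symP (r : rel D) : (forall u v, r u v -> connect r v u) -> connect_sym r.
Proof.
move=> H.
have H1 u v : connect r u v -> connect r v u.
  move/connectP=> [p pth ->]; elim: p u pth => [|w p IH] u /=; first by rewrite connect0.
  by move/andP=> [ruw pth]; apply: connect_trans (IH _ pth) (H _ _ ruw).
by move=> u v; apply/idP/idP; apply: H1.
Qed.

Variables (r1 r2 : rel D) (x y : D).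
Hypothesis sym1 : connect_sym r1.
Hypothesis sym2 : connect_sym r2.
Hypothesis sub12 : forall u v, r1 u v -> connect r2 u v.
Hypothesis sub21 : forall u v, r2 u v -> r1 u v || ((u == x) && (v == y)) || ((u == y) && (v == x)).

Local Notation K := [set w | connect r1 x w || connect r1 y w].

Lemma path21 u v : connect r2 u v -> connect r1 u v \/ (u \in K /\ v \in K).
Proof.
move/connectP=> [p pth ->] {v}; elim: p u pth => [|w p IH] u /=; first by left; rewrite connect0.
move/andP=> [ruw pth]; have := IH _ pth; set v := last w p => IHw.
have uxy : (u == x) || (u == y) -> u \in K.
  by case/orP=> /eqP ->; rewrite inE connect0 ?orbT.
case/orP: (sub21 ruw) => [/orP[r1uw|/andP[/eqP eu /eqP ew]]|/andP[/eqP eu /eqP ew]].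
- case: IHw => [c|[wK vK]]; first by left; apply: connect_trans (connect1 r1uw) c.
  right; split=> //; rewrite inE in wK *.
  have wu : connect r1 w u by rewrite sym1 connect1.
  by case/orP: wK => c; rewrite inE (connect_trans c wu) ?orbT.
- right; split; first by apply: uxy; rewrite eu eqxx.
  case: IHw => [c|[_ //]]; by rewrite inE -ew c orbT.
- right; split; first by apply: uxy; rewrite eu eqxx orbT.
  case: IHw => [c|[_ //]]; by rewrite inE -ew c.
Qed.

Lemma merge_card : (#|cls r1| <= #|cls r2| + 1)%N /\ (connect r1 x y -> #|cls r1| <= #|cls r2|)%N.
Proof.
set U := ~: K.
pose c1 u := [set v | connect r1 u v]; pose c2 u := [set v | connect r2 u v].
have cE (r : rel D) : connect_sym r -> forall u v,
    ([set w | connect r u w] == [set w | connect r v w]) = connect r u v.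
  move=> sy u v; apply/eqP/idP => [e|c].
    have : v \in [set w | connect r v w] by rewrite inE connect0.
    by rewrite -e inE.
  apply/setP=> w; rewrite !inE; apply/idP/idP => h; last exact: connect_trans c h.
  by rewrite sy in c; apply: connect_trans c h.
set A1 := [set c1 u | u in U]; set A2 := [set c2 u | u in U].
have UK u : u \in U -> connect r1 x u = false /\ connect r1 y u = false.
  by rewrite !inE negb_or => /andP[/negbTE -> /negbTE ->].
pose F (C : {set D}) := \bigcup_(w in C :&: U) c1 w.
have FE u : u \in U -> F (c2 u) = c1 u.
  move=> uU; apply/setP=> v; apply/bigcupP/idP.
    move=> [w]; rewrite !inE => /andP[uw wU] vw.
    case: (path21 uw) => [c|[uK _]]; last by move: uU; rewrite inE uK.
    exact: connect_trans c vw.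
  by move=> h; exists u => //; rewrite in_setI uU inE connect0.
have A12 : A1 = F @: A2.
  rewrite -imset_comp; apply: eq_in_imset => u uU /=; by rewrite FE.
have cA1 : (#|A1| <= #|A2|)%N by rewrite A12 leq_imset_card.
have cls1 : cls r1 \subset A1 :|: [set c1 x; c1 y].
  apply/subsetP=> C /imsetP[u _ ->]; rewrite !inE.
  case uU: (u \in U); first by rewrite imset_f.
  move: uU; rewrite !inE => /negbFE /orP[c|c].
    by apply/orP; right; apply/orP; left; apply/eqP/setP => w; rewrite !inE;
      apply/idP/idP => h; [|rewrite sym1 in c]; apply: connect_trans c h.
  by apply/orP; right; apply/orP; right; apply/eqP/setP => w; rewrite !inE;
      apply/idP/idP => h; [|rewrite sym1 in c]; apply: connect_trans c h.
have cls2 : A2 :|: [set c2 x] \subset cls r2.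
  apply/subsetP=> C; rewrite !inE => /orP[/imsetP[u _ ->]|/eqP->]; exact: imset_f.
have nA2 : c2 x \notin A2.
  apply/imsetP=> [[u uU /eqP]]; rewrite cE // => c.
  case: (path21 c) => [c'|[_ xK]]; last by rewrite in_setC xK in uU.
  by have [h _] := UK u uU; rewrite c' in h.
have c2b : (#|A2| + 1 <= #|cls r2|)%N.
  by move: (subset_leq_card cls2); rewrite setUC cardsU1 nA2 addnC.
split.
  apply: leq_trans (subset_leq_card cls1) _.
  apply: leq_trans (leq_card_setU _ _) _.
  rewrite cards2; case: (_ != _) => /=; [apply: leq_trans (leq_add cA1 (leqnn 2)) _ | apply: leq_trans (leq_add cA1 (leqnn 1)) _]; [by rewrite addn2 addn1 ltnS -addn1 | exact: leq_trans c2b (leq_addr _ _)].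
move=> cxy.
have e : c1 x = c1 y by apply/eqP; rewrite cE.
apply: leq_trans (subset_leq_card cls1) _.
apply: leq_trans (leq_card_setU _ _) _.
rewrite e setUid cards1; apply: leq_trans (leq_add cA1 (leqnn 1)) _; by rewrite addn1 -addn1.
Qed.
End Merge.

Section Cyc.
Local Open Scope group_scope.
Variable D : finType.
Definition rst (s t : {perm D}) : rel D := fun u v => (v == s u) || (v == t u).
Definition moved (t : {perm D}) := [set x | t x != x].

Lemma porbitE (s : {perm D}) x : porbit s x = [set y | fconnect s x y].
Proof.
apply/setP=> y; rewrite inE; apply/porbitP/idP => [[i ->]|c].
  by rewrite permX fconnect_iter.
by exists (findex s x y); rewrite permX iter_findex.
Qed.

Lemma rst_sym (s t : {perm D}) : involutive t -> connect_sym (rst s t).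
Proof.
move=> It; apply: conn_symP => u v /orP[/eqP->|/eqP->].
  have : fconnect s (s u) u by rewrite fconnect_sym ?fconnect1 //; exact: perm_inj.
  apply: connect_sub => a b /eqP<-; apply: connect1; by rewrite /rst eqxx.
by apply: connect1; rewrite /rst It eqxx orbT.
Qed.

Lemma fconnect_rst (s t : {perm D}) u v : fconnect (t * s) u v -> connect (rst s t) u v.
Proof.
apply: connect_sub => a b /eqP<-; rewrite permM.
apply: (@connect_trans _ _ (t a)); apply: connect1; by rewrite /rst eqxx ?orbT.
Qed.

Lemma cyc_base (s : {perm D}) :
  ((#|porbits s| + #|porbits (1 * s)|).*2 <= #|moved 1| + 4 * #|cls (rst s 1)|)%N.
Proof.
have -> : cls (rst s 1) = porbits s.
  apply: eq_imset => u; rewrite porbitE; apply/setP=> v; rewrite !inE.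
  apply/idP/idP; apply: connect_sub => a b.
    by move=> /orP[/eqP->|/eqP->]; rewrite ?perm1 ?connect0 // fconnect1.
  by move=> /eqP<-; apply: connect1; rewrite /rst eqxx.
rewrite mul1g; set z := #|porbits s|; lia.
Qed.

Lemma ar1 zs z' zt mv' mv b1 b2 : ((zs+z').*2 <= mv' + 4*b1 -> zt + (~~ true).*2 = z' + true ->
  b1 <= b2 -> mv' + 2 = mv -> (zs+zt).*2 <= mv + 4*b2)%N.
Proof. simpl; lia. Qed.
Lemma ar2 zs z' zt mv' mv b1 b2 : ((zs+z').*2 <= mv' + 4*b1 -> zt + (~~ false).*2 = z' + true ->
  b1 <= b2 + 1 -> mv' + 2 = mv -> (zs+zt).*2 <= mv + 4*b2)%N.
Proof. simpl; lia. Qed.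

Lemma cyc (s t : {perm D}) : involutive t ->
  ((#|porbits s| + #|porbits (t * s)|).*2 <= #|moved t| + 4 * #|cls (rst s t)|)%N.
Proof.
move: {2}#|moved t| (leqnn #|moved t|) => m; elim: m t => [|m IH] t Hm It.
  have t1 : t = 1.
    have /eqP e0 : moved t == set0 by rewrite -cards_eq0; lia.
    apply/permP=> x; rewrite perm1; apply/eqP; apply: contraT => h.
    have : x \in moved t by rewrite inE.
    by rewrite e0 inE.
  by rewrite t1; apply: cyc_base.
case: (set_0Vmem (moved t)) => [e0|[x xm]].
  have t1 : t = 1.
    apply/permP=> z; rewrite perm1; apply/eqP; apply: contraT => h.
    have : z \in moved t by rewrite inE.
    by rewrite e0 inE.
  by rewrite t1; apply: cyc_base.
set y := t x.
have xy : x != y by move: xm; rewrite inE eq_sym.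
set t' := tperm x y * t.
have t'x : t' x = x by rewrite permM tpermL It.
have t'y : t' y = y by rewrite permM tpermR.
have t'u u : u != x -> u != y -> t' u = t u.
  by move=> ux uy; rewrite permM tpermD // eq_sym.
have tux u : (t u == x) = (u == y).
  apply/eqP/eqP => [e|e]; last by rewrite e /y It.
  by rewrite -(It u) e.
have tuy u : (t u == y) = (u == x).
  apply/eqP/eqP => [e|e]; last by rewrite e.
  by rewrite -(It u) e /y It.
have It' : involutive t'.
  move=> u; case: (eqVneq u x) => [->|ux]; first by rewrite !t'x.
  case: (eqVneq u y) => [->|uy]; first by rewrite !t'y.
  rewrite (t'u u ux uy) t'u ?tux ?tuy //.
have mv : moved t' = moved t :\ x :\ y.
  apply/setP=> u; rewrite !inE.
  case: (eqVneq u x) => [->|ux]; first by rewrite t'x eqxx /= andbF.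
  case: (eqVneq u y) => [->|uy]; first by rewrite t'y eqxx.
  by rewrite t'u.
have ym : y \in moved t by move: xm; rewrite !inE /y It eq_sym.
have cmv : (#|moved t'| + 2 = #|moved t|)%N.
  rewrite mv (cardsD1 x (moved t)) xm (cardsD1 y (moved t :\ x)) !inE eq_sym xy.
  by move: ym; rewrite inE => ->; lia.
have tE : t = tperm x y * t'.
  by rewrite /t' mulgA tperm2 mul1g.
have IH' := IH t' ltac:(lia) It'.
have hp := porbits_mul_tperm (t' * s) x y.
rewrite /= mulgA -tE xy in hp.
have sub21 : forall u v, rst s t u v ->
    rst s t' u v || ((u == x) && (v == y)) || ((u == y) && (v == x)).
  move=> u v /orP[h|/eqP->]; first by rewrite /rst h.
  case: (eqVneq u x) => [->|ux]; first by rewrite eqxx orbT.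
  case: (eqVneq u y) => [->|uy]; first by rewrite /y It eqxx !orbT.
  by rewrite /rst t'u // eqxx orbT.
have [m1 m2] := @merge_card D (rst s t') (rst s t) x y (rst_sym s It') (rst_sym s It) sub21.
case: (boolP (x \in porbit (t' * s) y)) => xo.
  have c : connect (rst s t') x y.
    by rewrite rst_sym //; apply: fconnect_rst; move: xo; rewrite porbitE inE.
  by rewrite xo in hp; exact: ar1 IH' hp (m2 c) cmv.
by rewrite xo in hp; exact: ar2 IH' hp m1 cmv.
Qed.
End Cyc.

Section Faces.
Local Open Scope group_scope.
Variable D : finType.

Lemma ar3 a b i d1 d2 : a = b -> i + d2 = b -> i + d1 = a -> ~~ odd (d1 + d2).
Proof. move=> -> <- /eqP; rewrite eqn_add2l => /eqP ->; by rewrite addnn odd_double. Qed.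

Lemma parity (p : {perm D}) x0 (W : {set D}) :
  ~~ odd #|[set y | fconnect p x0 y && ((y \in W) != (p y \in W))]|.
Proof.
set f := [set y | fconnect p x0 y].
set A := [set y in f | y \in W]; set B := [set y in f | p y \in W].
have AB : #|A| = #|B|.
  have -> : A = p @: B.
    apply/setP=> z; apply/idP/imsetP.
      rewrite !inE => /andP[fz zW]; exists ((p^-1) z); last by rewrite permKV.
      rewrite !inE permKV zW andbT.
      apply: connect_trans fz _; rewrite fconnect_sym; last exact: perm_inj.
      by rewrite -{2}(permKV p z) fconnect1.
    move=> [y]; rewrite !inE => /andP[fy yW] ->; rewrite yW andbT.
    exact: connect_trans fy (fconnect1 _ _).
  by rewrite card_imset //; exact: perm_inj.
have -> : [set y | fconnect p x0 y && ((y \in W) != (p y \in W))] = (A :\: B) :|: (B :\: A).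
  apply/setP=> y; rewrite !inE; case: (fconnect p x0 y); case: (y \in W); case: (p y \in W) => //.
have e0 : (A :\: B) :&: (B :\: A) = set0.
  apply/setP=> y; rewrite !inE; case: (fconnect p x0 y); case: (y \in W); case: (p y \in W) => //.
rewrite cardsU e0 cards0 subn0.
have h1 := cardsID B A; have h2 := cardsID A B; rewrite setIC in h2.
exact: ar3 AB h2 h1.
Qed.

Lemma face_sum (p : {perm D}) (F : {set D}) : \sum_(f in porbits p) #|f :&: F| = #|F|.
Proof.
transitivity (\sum_(f in porbits p) \sum_(x in F) ((x \in f) : nat)).
  apply: eq_bigr => f _; rewrite -sum1_card big_mkcond [RHS]big_mkcond.
  by apply: eq_bigr => x _; rewrite !inE; case: (x \in f); case: (x \in F).
rewrite exchange_big -sum1_card; apply: eq_bigr => x _.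
rewrite (bigD1 (porbit p x)) /=; last by rewrite imset_f.
rewrite porbit_id big1 // => f /andP[/imsetP[y _ ->] ne].
case: (boolP (x \in porbit p y)) => // xy.
by move: ne; rewrite eq_sym eq_porbit_mem xy.
Qed.

Lemma card_sub (P : {set {set D}}) (Q : pred {set D}) :
  #|[set f in P | Q f]| = \sum_(f in P) ((Q f) : nat).
Proof.
rewrite -sum1_card big_mkcond [RHS]big_mkcond.
by apply: eq_bigr => f _; rewrite !inE; case: (f \in P); case: (Q f).
Qed.

Lemma ar4 m : 2 <= m -> (2 < m) + 2 * true <= m.
Proof. by case: m => [|[|[|m]]]. Qed.

Lemma high_bound (P : {set {set D}}) (F : {set D}) :
  (forall f, f \in P -> f :&: F != set0 -> 2 <= #|f :&: F|) ->
  #|[set f in P | 2 < #|f :&: F|]| + 2 * #|[set f in P | f :&: F != set0]|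
    <= \sum_(f in P) #|f :&: F|.
Proof.
move=> H; rewrite !card_sub big_distrr -big_split /=; apply: leq_sum => f fP.
case: (eqVneq (f :&: F) set0) => [->|ne]; first by rewrite cards0.
by apply: ar4; exact: H.
Qed.
End Faces.

Import Order.TTheory GRing.Theory Num.Theory.
Local Open Scope ring_scope.

Lemma cutset_aclosed (D : finType) (a : D -> D) (W : {set D}) :
  involutive a -> a_closed a (cutset a W).
Proof. by move=> Ia x; rewrite !inE Ia eq_sym. Qed.

Lemma comp_bound (R : realFieldType) (D : finType) (a n : D -> D) (c : D -> R)
  (k : nat) (q : 'I_k -> D) (s t : {perm D}) (S T : {set 'I_k}) (WS WT : {set D}) :
  involutive a -> (forall x y, connect [rel u v | (v == n u) || (v == a u)] x y) ->
  (forall x, 0 < c x) ->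
  (forall F1 F2 : {set D}, a_closed a F1 -> a_closed a F2 -> F1 != F2 ->
      ecost c F1 != ecost c F2) ->
  S != set0 -> separating n q S WS -> separating n q T WT ->
  (forall W', separating n q S W' -> ecost c (cutset a WS) <= ecost c (cutset a W')) ->
  (forall W', separating n q T W' -> ecost c (cutset a WT) <= ecost c (cutset a W')) ->
  s =1 n -> t =1 (fun x => if x \in cutset a WS :|: cutset a WT then x else a x) ->
  involutive t ->
  (#|cls (rst s t)| <= k)%N.
Proof.
move=> Ia Conn cpos cdist S0 sepS sepT minS minT sn tE It.
set ES := cutset a WS; set ET := cutset a WT; set F := ES :|: ET.
set r := rst s t.
have sym := rst_sym s It.
suff H : forall u, exists i, q i \in [set v | connect r u v].
  apply: leq_trans (_ : #|[set [set v | connect r (q i) v] | i : 'I_k]| <= k)%N; last first.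
    by apply: leq_trans (leq_imset_card _ _) _; rewrite card_ord.
  apply: subset_leq_card; apply/subsetP=> C /imsetP[u _ ->].
  have [i qi] := H u; apply/imsetP; exists i => //.
  rewrite inE in qi; apply/setP=> v; rewrite !inE; apply/idP/idP => h.
    by rewrite sym in qi; apply: connect_trans qi h.
  exact: connect_trans qi h.
move=> u; apply/existsP; apply: contraT; rewrite negb_exists => /forallP H.
set C := [set v | connect r u v].
have uC : u \in C by rewrite inE connect0.
have rC v w : r v w -> (v \in C) = (w \in C).
  move=> rvw; rewrite !inE; apply/idP/idP => h; first exact: connect_trans h (connect1 rvw).
  by apply: connect_trans h _; rewrite sym connect1.
have nC v : (v \in C) = (n v \in C) by apply: rC; rewrite /r /rst sn eqxx.
have aC v : v \notin F -> (v \in C) = (a v \in C).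
  by move=> vF; apply: rC; rewrite /r /rst tE (negbTE vF) eqxx orbT.
set X := [set v | (v \in C) != (a v \in C)].
have XF v : v \in X -> v \in F.
  by rewrite inE; apply: contraTT => vF; rewrite aC // eqxx.
have X0 : X != set0.
  apply/negP => /eqP e.
  have HX v : v \notin X by rewrite e inE.
  have cl : closed [rel u v | (v == n u) || (v == a u)] (mem C).
    move=> v w /orP[/eqP->|/eqP->]; first exact: nC.
    by have := HX v; rewrite inE negbK => /eqP.
  have [i iS] := set0Pn _ S0.
  by have := H i; rewrite -(closed_connect cl (Conn u (q i))) uC.
have Xa : a_closed a X by move=> v; rewrite !inE Ia eq_sym.
have nC' v : connect r u v = connect r u (n v) by have := nC v; rewrite !inE.
have H' i : connect r u (q i) = false by have := H i; rewrite inE => /negbTE.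
have key : forall (U : {set 'I_k}) W, separating n q U W ->
    (forall W', separating n q U W' -> ecost c (cutset a W) <= ecost c (cutset a W')) ->
    ecost c (cutset a W) < ecost c [set v | (v \in cutset a W) != (v \in X)].
  move=> U W [nW sW] minW.
  set W' := [set v | (v \in W) != (v \in C)].
  have sW' : separating n q U W'.
    split; first by move=> v; rewrite !inE (nW v) (nC' v).
    have -> : [set i | q i \in W'] = [set i | q i \in W].
      by apply/setP=> i; rewrite !inE H' /=; case: (q i \in W).
    exact: sW.
  have cE : cutset a W' = [set v | (v \in cutset a W) != (v \in X)].
    apply/setP=> v; rewrite !inE.
    by case: (v \in W); case: (a v \in W); case: (connect r u v); case: (connect r u (a v)).
  rewrite -cE lt_neqAle minW // andbT cdist //; first exact: cutset_aclosed.
    by rewrite cE => v; rewrite in_set [RHS]in_set (cutset_aclosed W Ia v) (Xa v).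
  have [x xX] := set0Pn _ X0.
  apply/eqP => /setP/(_ x); rewrite cE in_set xX.
  by case: (x \in cutset a W).
have hS := key S WS sepS minS; have hT := key T WT sepT minT.
set ES' := [set v | (v \in ES) != (v \in X)] in hS.
set ET' := [set v | (v \in ET) != (v \in X)] in hT.
have le : \sum_(x in ES') c x + \sum_(x in ET') c x <= \sum_(x in ES) c x + \sum_(x in ET) c x.
  rewrite !(big_mkcond (fun x => x \in _)) -!big_split /=; apply: ler_sum => x _.
  have := XF x; have := cpos x; rewrite /ES' /ET' !(in_set (fun v => _ != (v \in X))) /ES /ET /F in_setU.
  case: (x \in X); case: (x \in ES); case: (x \in ET) => //= cx h; try lra.
move: hS hT le; rewrite /ecost; lra.
Qed.

Lemma orbits_porbits (D : finType) (f : D -> D) (p : {perm D}) : p =1 f -> orbits f = porbits p.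
Proof.
move=> pf; apply: eq_imset => x; rewrite porbitE; apply/setP=> y; rewrite !inE.
by rewrite (eq_fconnect pf).
Qed.

Lemma ar5 (V Fc zp VH hi b k N NF NC : nat) :
  (V + Fc = N./2 + 2 -> (V + zp).*2 <= NC + 4 * b -> NF + NC = N ->
  Fc <= zp + VH -> hi + 2 * VH <= NF -> b <= k -> hi <= 6 * k)%N.
Proof. move=> h1 h2 h3 h4 h5 h6; have := odd_double_half N; case: (odd N) => /=; lia. Qed.

Lemma ar6 m : (0 < m)%N -> ~~ odd m -> (2 <= m)%N.
Proof. by case: m => [|[|m]]. Qed.

Unset Implicit Arguments.

Theorem corollary2p5 (R : realFieldType) (D : finType) (a n : D -> D)
  (c : D -> R) (k : nat) (q : 'I_k -> D) :
  connected_plane_map a n ->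
  (forall x, 0 < c x) -> (forall x, c (a x) = c x) ->
  (forall F1 F2 : {set D}, a_closed a F1 -> a_closed a F2 -> F1 != F2 ->
      ecost c F1 != ecost c F2) ->
  (forall i j, fconnect n (q i) (q j) -> i = j) ->
  forall (S T : {set 'I_k}) (ES ET : {set D}),
    S != set0 -> S != setT -> T != set0 -> T != setT ->
    min_sep_cutset a n c q S ES -> min_sep_cutset a n c q T ET ->
    (dual_high_degree a n (ES :|: ET) <= 6 * k)%N.
Proof.
move=> [Ia afix In Conn Euler] cpos ca cdist qdist S T ES ET S0 ST T0 TT.
move=> [WS [sepS ESE minS]] [WT [sepT ETE minT]].
subst ES ET.
set F := cutset a WS :|: cutset a WT.
pose ap x := if x \in F then x else a x.
have Fa x : (x \in F) = (a x \in F).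
  by rewrite !in_setU -!(cutset_aclosed _ Ia).
have apI : involutive ap.
  move=> x; rewrite /ap; case: (boolP (x \in F)) => xF; first by rewrite xF.
  by rewrite -Fa (negbTE xF) Ia.
set s := perm In; set t := perm (inv_inj apI); set al := perm (inv_inj Ia).
have It : involutive t by move=> x; rewrite !permE apI.
have hb := comp_bound Ia Conn cpos cdist S0 sepS sepT minS minT
   (fun x => permE In x) (fun x => permE (inv_inj apI) x) It.
have hc := cyc s It.
have mv : moved t = ~: F.
  apply/setP=> x; rewrite in_set in_setC permE /ap; case: (x \in F) => /=; by rewrite ?eqxx ?afix.
have vE : vertices n = porbits s by apply: orbits_porbits => x; rewrite permE.
have fE : faces a n = porbits (al * s)%g.
  by apply: orbits_porbits => x; rewrite permM !permE.
set phi := (al * s)%g.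
have phiE z : phi z = n (a z) by rewrite permM !permE.
have psiE z : (t * s)%g z = n (ap z) by rewrite permM !permE.
set P := porbits phi.
have unt : [set f in P | f :&: F == set0] \subset porbits (t * s)%g.
  apply/subsetP=> f; rewrite inE => /andP[/imsetP[x _ ->] /eqP f0].
  have it i : iter i (t * s)%g x = iter i phi x.
    elim: i => // i IH; rewrite !iterS IH psiE phiE /ap.
    case: (boolP (iter i phi x \in F)) => // zF.
    have : iter i phi x \in porbit phi x :&: F.
      by rewrite inE zF andbT porbitE inE fconnect_iter.
    by rewrite f0 inE.
  have -> : porbit phi x = porbit (t * s)%g x.
    by apply/setP=> y; apply/porbitP/porbitP => [[i ->]|[i ->]]; exists i; rewrite !permX it.
  exact: imset_f.
have cP : #|P| = (#|[set f in P | f :&: F != set0]| + #|[set f in P | f :&: F == set0]|)%N.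
  rewrite !card_sub -big_split /= -sum1_card; apply: eq_bigr => f _.
  by case: (_ == _).
have par W : n_closed n W -> forall x, ~~ odd #|porbit phi x :&: cutset a W|.
  move=> nW x; have := parity phi x W.
  have -> // : [set y | fconnect phi x y && ((y \in W) != (phi y \in W))] =
      porbit phi x :&: cutset a W.
  apply/setP=> y; rewrite porbitE !in_set phiE -(nW (a y)) //.
have touched : forall f, f \in P -> f :&: F != set0 -> (2 <= #|f :&: F|)%N.
  move=> f /imsetP[x _ ->] /set0Pn[y]; rewrite !inE => /andP[yf yF].
  case/orP: yF => yW.
    apply: leq_trans (ar6 _ (par WS sepS.1 x)) (subset_leq_card _).
      by apply/card_gt0P; exists y; rewrite in_setI yf inE.
    by apply/subsetP=> z; rewrite !inE => /andP[-> ->].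
  apply: leq_trans (ar6 _ (par WT sepT.1 x)) (subset_leq_card _).
    by apply/card_gt0P; exists y; rewrite in_setI yf inE.
  by apply/subsetP=> z; rewrite !inE => /andP[-> ->]; rewrite orbT.
have hh := high_bound touched.
rewrite face_sum in hh.
have Eul : (#|porbits s| + #|P| = #|D|./2 + 2)%N by move: Euler; rewrite vE fE.
rewrite /dual_high_degree fE -/P -/F.
apply: (ar5 Eul hc _ _ hh hb).
  by rewrite mv cardsC.
rewrite cP addnC leq_add2r.
exact: subset_leq_card unt.
Qed.
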